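(* Let $K$ be a field, $q\in K[x_1]\setminus K$, and let $F=\{f_1,\dots,f_s\}\subset R_q[\tilde{\bm{x}}]\setminus R_q$. For every $f\in R_q[\tilde{\bm{x}}]$ there exist a multiplier $\lambda\in R_q^\times$, a remainder $r\in R_q[\tilde{\bm{x}}]$ that is properly reduced with respect to $F$, and quotients $h_1,\dots,h_s\in R_q[\tilde{\bm{x}}]$ such that $$\lambda f=\sum_{j=1}^s h_jf_j+r$$ and $$\operatorname{lm}(f)=\max\Bigl\{\max_{1\le j\le s}\{\operatorname{lm}(h_j)\cdot\operatorname{lm}(f_j)\},\ \operatorname{lm}(r)\Bigr\}.$$
   Context: $R_q:=\{r\in K[x_1]:\deg r<\deg q\}$ with addition and multiplication modulo $q$, so $R_q\cong K[x_1]/(q)$; $R_q^\times$ is its group of units, $R_q^\ast=R_q\setminus\{0\}$. $\sigma_q:K[x_1]\to R_q$ sends $f$ to its remainder modulo $q$, and $\iota_q:R_q\hookrightarrow K[x_1]$ is the inclusion; both are extended coefficientwise to polynomials in $\tilde{\bm{x}}=(x_2,\dots,x_n)$. A monomial ordering $\succ$ on monomials in $\tilde{\bm{x}}$ is fixed; for nonzero $f\in R_q[\tilde{\bm{x}}]$, $\operatorname{lm}(f)$ is the $\succ$-largest monomial with nonzero coefficient and $\operatorname{lc}(f)$ that coefficient. Gcds in $K[x_1]$ are monic, $\operatorname{lcm}(a,b)=ab/\gcd(a,b)$. A nonzero term $c_\alpha\tilde{\bm{x}}^\alpha$ of a polynomial in $R_q[\tilde{\bm{x}}]$ is properly reducible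 with respect to $F$ if there is $f_j\in F$ with $\operatorname{lm}(f_j)\mid\tilde{\bm{x}}^\alpha$ such that the interim multiplier $\mu:=\sigma_q\bigl(\operatorname{lcm}(l_\alpha,l_j)/l_\alpha\bigr)$ lies in $R_q^\times$, where $l_\alpha=\iota_q(c_\alpha)$, $l_j=\iota_q(\operatorname{lc}(f_j))$. A polynomial is properly reduced with respect to $F$ if none of its terms is properly reducible (in particular $0$ is properly reduced). *)

(* Defs.v *)
From HB Require Import structures.
From mathcomp Require Import all_boot all_order all_algebra.
From mathcomp Require Import mpoly.
Set Implicit Arguments. Unset Strict Implicit. Unset Printing Implicit Defensive.
Import Order.TTheory GRing.Theory.
Import Pdiv.Field.
Local Open Scope ring_scope.

Section Defs.
Variable K : fieldType.

(* Monic associate of q; K[x1]/(q) = K[x1]/(qmonic q). *)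
Definition qmonic (q : {poly K}) : {poly K} := (lead_coef q)^-1 *: q.

Definition Rq (q : {poly K}) := {poly %/ qmonic q}.

Definition sigma_q (q : {poly K}) (f : {poly K}) : Rq q := in_qpoly (qmonic q) f.

Definition iota_q (q : {poly K}) (c : Rq q) : {poly K} := val c.

Definition mgcd (a b : {poly K}) : {poly K} :=
  (lead_coef (gcdp a b))^-1 *: gcdp a b.
Definition plcm (a b : {poly K}) : {poly K} := (a * b) %/ mgcd a b.
End Defs.

Section Monomial.
Variable m : nat.

Definition monomial_order (le : rel 'X_{1..m}) : Prop :=
  [/\ [/\ reflexive le, antisymmetric le, transitive le & total le],
      (forall a b c : 'X_{1..m}, le a b -> le (a + c)%MM (b + c)%MM)
    & (forall a : 'X_{1..m}, le 0%MM a)].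

(* maximum of optional monomials; None stands for "no monomial" (bottom). *)
Definition omax (le : rel 'X_{1..m}) (a b : option 'X_{1..m}) :=
  match a, b with
  | None, _ => b
  | _, None => a
  | Some x, Some y => if le x y then Some y else Some x
  end.

Definition omul (a b : option 'X_{1..m}) :=
  match a, b with
  | Some x, Some y => Some (x + y)%MM
  | _, _ => None
  end.

Variable R : ringType.

Definition lm (le : rel 'X_{1..m}) (f : {mpoly R[m]}) : option 'X_{1..m} :=
  foldr (fun x acc => omax le (Some x) acc) None (msupp f).

Definition lc (le : rel 'X_{1..m}) (f : {mpoly R[m]}) : R :=
  if lm le f is Some a then f@_a else 0.
End Monomial.

Section Reduction.
Variables (K : fieldType) (q : {poly K}) (m s : nat).
Variable le : rel 'X_{1..m}.
Variable F : 'I_s -> {mpoly (Rq q)[m]}.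

Definition properly_reducible (c : Rq q) (alpha : 'X_{1..m}) : Prop :=
  exists j : 'I_s, exists2 beta : 'X_{1..m},
    lm le (F j) = Some beta /\ (beta <= alpha)%MM &
    let l_alpha := iota_q c in
    let l_j := iota_q (lc le (F j)) in
    sigma_q q (plcm l_alpha l_j %/ l_alpha) \is a GRing.unit.

Definition properly_reduced (r : {mpoly (Rq q)[m]}) : Prop :=
  forall alpha, alpha \in msupp r -> ~ properly_reducible r@_alpha alpha.
End Reduction.

(* Main.v *)
Require Import Defs.
From HB Require Import structures.
From mathcomp Require Import all_boot all_order all_algebra.
From mathcomp Require Import mpoly.
From Stdlib Require Import Classical ClassicalEpsilon.
Import GRing.Theory.
Set Implicit Arguments. Unset Strict Implicit.
Local Open Scope ring_scope.

Lemma ex_minval (w : nat -> nat) (i : nat) :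
  exists j, (i < j)%N /\ forall k, (i < k)%N -> (w j <= w k)%N.
Proof.
suff H : forall n j, (w j <= n)%N -> (i < j)%N ->
  exists j, (i < j)%N /\ forall k, (i < k)%N -> (w j <= w k)%N.
  by apply: (H _ i.+1 (leqnn _)).
elim=> [|n IH] j hj hij.
  exists j; split=> // k _; move: hj; rewrite leqn0 => /eqP ->; exact: leq0n.
case: (classic (exists k, (i < k)%N /\ (w k < w j)%N)) => [[k [hk hkj]]|hn].
  by apply: (IH k) => //; rewrite -ltnS (leq_trans hkj hj).
exists j; split=> // k hk; rewrite leqNgt; apply/negP => hc; apply: hn.
by exists k.
Qed.

Lemma sub_mono (w : nat -> nat) : exists psi : nat -> nat,
  (forall n, (psi n < psi n.+1)%N) /\ (forall n, (w (psi n) <= w (psi n.+1))%N).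
Proof.
pose nx i := proj1_sig (constructive_indefinite_description _ (ex_minval w i)).
have nxP i : (i < nx i)%N /\ forall k, (i < k)%N -> (w (nx i) <= w k)%N.
  exact: (proj2_sig (constructive_indefinite_description _ (ex_minval w i))).
exists (fun n => iter n.+1 nx 0%N); split=> n.
  by rewrite [X in (_ < X)%N]iterS; case: (nxP (iter n.+1 nx 0%N)).
rewrite [X in (w X <= _)%N]iterS; apply: (nxP _).2.
rewrite iterS; apply: (ltn_trans (nxP _).1); exact: (nxP _).1.
Qed.

Section Dickson.
Variable m : nat.

Lemma dickson_aux (u : nat -> 'X_{1..m}) (k : nat) : exists phi : nat -> nat,
  (forall n, (phi n < phi n.+1)%N) /\
  (forall i : 'I_m, (i < k)%N -> forall n, (u (phi n) i <= u (phi n.+1) i)%N).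
Proof.
elim: k => [|k [phi [Hphi Hu]]].
  by exists id; split=> // i.
case: (ltnP k m) => hkm; last first.
  exists phi; split=> // i hi; apply: Hu; rewrite ltnS in hi.
  by apply: (leq_trans (ltn_ord i)).
have [psi [Hpsi Hw]] := sub_mono (fun n => u (phi n) (Ordinal hkm)).
have phimono : {homo phi : a b / (a < b)%N >-> (a < b)%N}.
  by apply: homo_ltn => //; exact: ltn_trans.
exists (fun n => phi (psi n)); split=> [n|i hi n]; first exact: phimono.
rewrite ltnS leq_eqVlt in hi; case/orP: hi => [/eqP hi|hi].
  have -> : i = Ordinal hkm by apply: val_inj.
  exact: Hw.
have := @homo_leq _ (fun n => u (phi n) i) leq leqnn leq_trans (Hu i hi).
by apply; apply: ltnW.
Qed.

Lemma dickson (u : nat -> 'X_{1..m}) : exists i j, (i < j)%N /\ (u i <= u j)%MM.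
Proof.
have [phi [Hphi Hu]] := dickson_aux u m.
exists (phi 0%N), (phi 1%N); split=> //.
by apply/mnm_lepP => i; apply: Hu.
Qed.

Variable le : rel 'X_{1..m}.
Hypothesis Hmo : monomial_order le.

Definition mlt a b := le a b && (a != b).

Lemma le_refl_ a : le a a. Proof. by case: Hmo => [[]]. Qed.
Lemma le_anti_ a b : le a b -> le b a -> a = b.
Proof. by case: Hmo => [[_ H _ _] _ _] h1 h2; apply: H; rewrite h1 h2. Qed.
Lemma le_trans_ b a c : le a b -> le b c -> le a c.
Proof. by case: Hmo => [[_ _ H _] _ _]; apply: H. Qed.
Lemma le_total_ a b : le a b || le b a.
Proof. by case: Hmo => [[_ _ _ H] _ _]; apply: H. Qed.
Lemma le_addr_ a b c : le a b -> le (a + c)%MM (b + c)%MM.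
Proof. by case: Hmo => [_ H _]; apply: H. Qed.
Lemma le_0_ a : le 0%MM a.
Proof. by case: Hmo => [_ _ H]; apply: H. Qed.

Lemma le_div a b : (a <= b)%MM -> le a b.
Proof.
move=> h; rewrite -(submK h); have := @le_addr_ _ _ a (le_0_ (b - a)%MM).
by rewrite add0m.
Qed.

Lemma mlt_trans b a c : mlt a b -> mlt b c -> mlt a c.
Proof.
case/andP=> h1 n1 /andP [h2 n2]; rewrite /mlt (le_trans_ h1 h2) /=.
apply/eqP => e; subst c; by move/eqP: n1; apply; apply: le_anti_.
Qed.

Lemma mlt_wf : well_founded mlt.
Proof.
move=> a; apply: NNPP => na.
pose T := {x | ~ Acc mlt x}.
have step : forall x : T, exists y : T, mlt (proj1_sig y) (proj1_sig x).
  case=> x nx /=; apply: NNPP => hn; apply: nx; constructor => y hy.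
  apply: NNPP => ny; apply: hn; by exists (exist _ y ny).
pose st x := proj1_sig (constructive_indefinite_description _ (step x)).
have stP x : mlt (proj1_sig (st x)) (proj1_sig x).
  exact: (proj2_sig (constructive_indefinite_description _ (step x))).
pose u n := proj1_sig (iter n st (exist _ a na)).
have hu : forall i j, (i < j)%N -> mlt (u j) (u i).
  move=> i j; elim: j => // j IH; rewrite ltnS leq_eqVlt => /orP [/eqP ->|hij].
    exact: stP.
  exact: (mlt_trans (stP _) (IH hij)).
have [i [j [hij hd]]] := dickson u.
have := hu _ _ hij; case/andP => h1 /eqP; apply; apply: le_anti_ => //.
exact: le_div.
Qed.
End Dickson.

Section Opt.
Variable m : nat.
Variable le : rel 'X_{1..m}.
Hypothesis Hmo : monomial_order le.

Definition ole (x y : option 'X_{1..m}) :=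
  match x, y with None, _ => true | Some _, None => false | Some a, Some b => le a b end.

Lemma ole_refl x : ole x x.
Proof. case: x => //= a; exact: (le_refl_ Hmo _). Qed.
Lemma ole_trans y x z : ole x y -> ole y z -> ole x z.
Proof.
case: x => [a|] //; case: y => [b|] //; case: z => [c|] //=; exact: (@le_trans_ _ _ Hmo b a c).
Qed.
Lemma ole_anti x y : ole x y -> ole y x -> x = y.
Proof.
by case: x => [a|]; case: y => [b|] //= h1 h2; rewrite (le_anti_ Hmo h1 h2).
Qed.
Lemma omax_geL x y : ole x (omax le x y).
Proof.
case: x => [a|] //; case: y => [b|] /=; last exact: (le_refl_ Hmo _).
by case: ifP => // _; exact: (le_refl_ Hmo _).
Qed.
Lemma omax_geR x y : ole y (omax le x y).
Proof.
case: x => [a|] /=; last exact: ole_refl.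
case: y => [b|] //=; case: ifP => h; first exact: (le_refl_ Hmo _).
by have := le_total_ Hmo a b; rewrite h.
Qed.
Lemma omax_le x y z : ole x z -> ole y z -> ole (omax le x y) z.
Proof. by case: x => [a|]; case: y => [b|] //=; case: ifP. Qed.

Lemma fold_ge (l : seq (option 'X_{1..m})) x : x \in l -> ole x (foldr (omax le) None l).
Proof.
elim: l => // y l IH; rewrite in_cons => /orP [/eqP ->|h] /=.
  exact: omax_geL.
exact: ole_trans (IH h) (omax_geR _ _).
Qed.
Lemma fold_le (l : seq (option 'X_{1..m})) z :
  (forall x, x \in l -> ole x z) -> ole (foldr (omax le) None l) z.
Proof.
elim: l => // y l IH h /=; apply: omax_le; first by apply: h; rewrite mem_head.
by apply: IH => x hx; apply: h; rewrite in_cons hx orbT.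
Qed.

Lemma lm_seqP (s : seq 'X_{1..m}) :
  match foldr (fun x acc => omax le (Some x) acc) None s with
  | None => s = [::]
  | Some a => a \in s /\ forall b, b \in s -> le b a end.
Proof.
elim: s => [|x s IH] //=.
case E: (foldr _ None s) IH => [a|] IH /=; last first.
  by rewrite IH; split; [rewrite mem_head | move=> b; rewrite mem_seq1 => /eqP ->; exact: (le_refl_ Hmo _)].
case: ifP => H.
  split; first by rewrite in_cons IH.1 orbT.
  by move=> b; rewrite in_cons => /orP [/eqP ->//|/IH.2].
split; first by rewrite mem_head.
have hax : le a x by have := le_total_ Hmo x a; rewrite H.
move=> b; rewrite in_cons => /orP [/eqP ->|hb]; first exact: (le_refl_ Hmo _).
exact: (le_trans_ Hmo (IH.2 b hb) hax).
Qed.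

Variable R : nzRingType.

Lemma lmP (f : {mpoly R[m]}) :
  match lm le f with
  | None => f = 0
  | Some a => a \in msupp f /\ forall b, b \in msupp f -> le b a end.
Proof.
rewrite /lm; have := lm_seqP (msupp f).
by case: (foldr _ None _) => // /msuppnil0.
Qed.

Lemma lm_char (f : {mpoly R[m]}) a :
  a \in msupp f -> (forall b, b \in msupp f -> le b a) -> lm le f = Some a.
Proof.
move=> ha hb; have := lmP f; case: (lm le f) => [a'|] ; last first.
  by move=> f0; move: ha; rewrite f0 mcoeff_msupp mcoeff0 eqxx.
by case=> ha' hb'; rewrite (le_anti_ Hmo (hb _ ha') (hb' _ ha)).
Qed.

Lemma lm0 : lm le (0 : {mpoly R[m]}) = None.
Proof.
by rewrite /lm; have /eqP -> : msupp (0 : {mpoly R[m]}) == [::] by rewrite msupp_eq0.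
Qed.

Lemma lm_eq0 (f : {mpoly R[m]}) : lm le f = None -> f = 0.
Proof. by move=> h; have := lmP f; rewrite h. Qed.

Lemma lm_bound (f : {mpoly R[m]}) b : b \in msupp f -> ole (Some b) (lm le f).
Proof.
move=> hb; have := lmP f; case: (lm le f) => [a [_ H]|f0]; first exact: H.
by move: hb; rewrite f0 mcoeff_msupp mcoeff0 eqxx.
Qed.
End Opt.

Section Key.
Variables (K : fieldType) (q : {poly K}).

Lemma sigma_val (c : Rq q) : sigma_q q (iota_q c) = c.
Proof. by apply: val_inj; rewrite /sigma_q /iota_q; apply: in_qpoly_small (size_mk_monic c). Qed.

Lemma sigmaM (a b : {poly K}) : sigma_q q (a * b) = sigma_q q a * sigma_q q b.
Proof. exact: in_qpolyM. Qed.

Lemma key (c lcj : Rq q) : c != 0 ->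
  sigma_q q (plcm (iota_q c) (iota_q lcj) %/ iota_q c) \is a GRing.unit ->
  exists d, c = d * lcj.
Proof.
move=> hc.
set l := iota_q c; set lj := iota_q lcj.
have l0 : l != 0 by apply: contraNneq hc => h; apply/eqP/val_inj.
have g0 : gcdp l lj != 0 by rewrite gcdp_eq0 negb_and l0.
have lg0 : (lead_coef (gcdp l lj))^-1 != 0 by rewrite invr_eq0 lead_coef_eq0.
set g := mgcd l lj.
have gl : g %| l by rewrite /g /mgcd dvdpZl // dvdp_gcdl.
have gj : g %| lj by rewrite /g /mgcd dvdpZl // dvdp_gcdr.
have -> : plcm l lj %/ l = lj %/ g by rewrite /plcm -divp_mulA // mulKp.
move=> hu.
exists ((sigma_q q (lj %/ g))^-1 * sigma_q q (l %/ g)).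
have E : sigma_q q (l %/ g) * lcj = sigma_q q (lj %/ g) * c.
  rewrite -{1}(sigma_val lcj) -(sigma_val c) -/l -/lj -!sigmaM.
  congr (sigma_q q _).
  by rewrite -{1}(divpK gj) -{2}(divpK gl) !mulrA [_ * (lj %/ g)]mulrC.
by rewrite -mulrA E mulKr.
Qed.
End Key.

Section Main.
Variables (K : fieldType) (q : {poly K}) (m s : nat).
Variable le : rel 'X_{1..m}.
Hypothesis Hmo : monomial_order le.
Variable F : 'I_s -> {mpoly (Rq q)[m]}.

Local Notation MP := {mpoly (Rq q)[m]}.

Definition olt (x : option 'X_{1..m}) a :=
  if x is Some b then mlt le b a else true.

Definition Q (f : MP) := exists (r : MP) (h : 'I_s -> MP),
  [/\ properly_reduced le F r, f = \sum_(j < s) h j * F j + r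
    & lm le f = omax le (foldr (omax le) None
         [seq omul (lm le (h j)) (lm le (F j)) | j <- enum 'I_s]) (lm le r)].

Lemma Q_bounds (f r : MP) (h : 'I_s -> MP) :
  lm le f = omax le (foldr (omax le) None
         [seq omul (lm le (h j)) (lm le (F j)) | j <- enum 'I_s]) (lm le r) ->
  (forall j, ole le (omul (lm le (h j)) (lm le (F j))) (lm le f)) /\
  ole le (lm le r) (lm le f).
Proof.
move=> E; rewrite E; split; last exact: omax_geR.
move=> j; have hj : j \in enum 'I_s by rewrite mem_enum.
exact: (ole_trans Hmo (fold_ge Hmo (map_f (fun j => omul (lm le (h j)) (lm le (F j))) hj)) (omax_geL Hmo _ _)).
Qed.

Lemma Q_of_bounds (f r : MP) (h : 'I_s -> MP) a :
  lm le f = Some a ->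
  (forall j, ole le (omul (lm le (h j)) (lm le (F j))) (Some a)) ->
  ole le (lm le r) (Some a) ->
  (lm le r = Some a \/ exists j, omul (lm le (h j)) (lm le (F j)) = Some a) ->
  lm le f = omax le (foldr (omax le) None
         [seq omul (lm le (h j)) (lm le (F j)) | j <- enum 'I_s]) (lm le r).
Proof.
move=> -> hj hr hex; apply: (ole_anti Hmo).
  case: hex => [<-|[j <-]]; first exact: omax_geR.
  have hj' : j \in enum 'I_s by rewrite mem_enum.
  exact: (ole_trans Hmo (fold_ge Hmo (map_f (fun j => omul (lm le (h j)) (lm le (F j))) hj')) (omax_geL Hmo _ _)).
apply: omax_le => //; apply: fold_le => x /mapP [j _ ->]; exact: hj.
Qed.

Lemma Q0 : Q 0.
Proof.
exists 0, (fun _ => 0); split.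
- by move=> a; rewrite mcoeff_msupp mcoeff0 eqxx.
- by rewrite big1 ?addr0 // => j _; rewrite mul0r.
rewrite lm0; apply: (ole_anti Hmo) => //.
apply: omax_le => //.
by apply: fold_le => x /mapP [j _ ->].
Qed.

Lemma olt_of (x : option 'X_{1..m}) (f : MP) a :
  ole le x (lm le f) -> (forall b, b \in msupp f -> mlt le b a) -> olt x a.
Proof.
move=> hx hb; have := lmP Hmo f; case E : (lm le f) hx => [c|] hx.
  case=> hc _; have /andP [hca nca] := hb _ hc.
  case: x hx => [b|] //= hbc; rewrite /mlt (le_trans_ Hmo hbc hca) /=.
  apply: contraNneq nca => ebc; subst b; apply/eqP; by apply: (le_anti_ Hmo).
by case: x hx.
Qed.

Lemma olt_ole x a : olt x a -> ole le x (Some a).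
Proof. by case: x => //= b /andP []. Qed.

Lemma mlt_not_le a b : mlt le a b -> ~~ le b a.
Proof.
case/andP=> h n; apply/negP => h'; move/eqP: n; apply; by apply: (le_anti_ Hmo).
Qed.

Lemma Q_all (f : MP) : Q f.
Proof.
have := lmP Hmo f; case E : (lm le f) => [a|]; last by move=> ->; exact: Q0.
move=> _; elim/(well_founded_ind (mlt_wf Hmo)): a f E => a IH f E.
have Qlow : forall f' : MP, (forall b, b \in msupp f' -> mlt le b a) -> Q f'.
  move=> f' hb; have := lmP Hmo f'; case E' : (lm le f') => [a'|]; last by move=> ->; exact: Q0.
  by case=> ha' _; apply: (IH a') => //; apply: hb.
have [ha hfa] : a \in msupp f /\ forall b, b \in msupp f -> le b a.
  by have := lmP Hmo f; rewrite E.
set c := f@_a.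
have c0 : c != 0 by rewrite /c -mcoeff_msupp.
case: (classic (exists j beta d, [/\ lm le (F j) = Some beta, (beta <= a)%MM &
                                    c = d * lc le (F j)])) => [[j [beta [d [hFj hba hcd]]]]|hn].
-
  set g := (a - beta)%MM.
  have ga : (g + beta)%MM = a by rewrite submK.
  set t : MP := (d *: F j) * 'X_[g].
  have [hbj hFb] : beta \in msupp (F j) /\ forall b, b \in msupp (F j) -> le b beta.
    by have := lmP Hmo (F j); rewrite hFj.
  have ht : forall b, b \in msupp t -> le b a.
    move=> b; rewrite (perm_mem (msuppMX _ _)) => /mapP [b' /msuppZ_le hb' ->].
    by rewrite -ga addmC [(g + _)%MM]addmC; apply: (le_addr_ Hmo); apply: hFb.
  have ta : t@_a = c.
    by rewrite /t -ga mcoeffMX mcoeffZ hcd /lc hFj.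
  set f' := f - t.
  have hf' : forall b, b \in msupp f' -> mlt le b a.
    move=> b hb; rewrite /mlt; apply/andP; split.
      by move: (msuppB_le hb); rewrite mem_cat => /orP [/hfa|/ht].
    apply: contraTneq hb => ->; rewrite mcoeff_msupp mcoeffB ta /c subrr eqxx //.
  have [r [h [hr hdec hlm]]] := Qlow f' hf'.
  have [hbh hbr] := Q_bounds hlm.
  pose h2 i := h i + (if i == j then d *: 'X_[g] else 0).
  exists r, h2; split=> //.
  + have -> : f = f' + t by rewrite /f' subrK.
    rewrite hdec /h2.
    rewrite [X in _ = X + _](eq_bigr (fun i => h i * F i + (if i == j then d *: 'X_[g] else 0) * F i)); last by move=> i _; rewrite mulrDl.
    have Hs : \sum_(i < s) (if i == j then d *: 'X_[g] else 0) * F i = (d *: 'X_[g]) * F j.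
      rewrite (bigD1 j) //= eqxx big1 => [|i /negPf ->]; last by rewrite mul0r.
      by rewrite addr0.
    rewrite big_split /= Hs /t -!addrA; congr (_ + _); rewrite addrC.
    by rewrite -!scalerAl mulrC.
  + have d0 : d != 0 by apply: contraNneq c0 => d0; rewrite hcd d0 mul0r.
    have hhj : lm le (h2 j) = Some g.
      have hlt : forall b, b \in msupp (h j) -> mlt le b g.
        move=> b hb; have := olt_of (hbh j) hf'; have := lm_bound Hmo hb.
        rewrite hFj; case: (lm le (h j)) => [a'|] //= hba' /andP [hle hne].
        have ngb : ~~ le g b.
          apply/negP => hgb.
          have : le a (a' + beta)%MM.
            by rewrite -ga; apply: (le_addr_ Hmo); exact: (le_trans_ Hmo hgb hba').
          move=> hle'; move/eqP: hne; apply; by apply: (le_anti_ Hmo).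
        rewrite /mlt; have := le_total_ Hmo b g; rewrite (negPf ngb) orbF => -> /=.
        by apply: contraNneq ngb => ->; exact: (le_refl_ Hmo _).
      have hg : g \notin msupp (h j).
        by apply/negP => /hlt /andP [_]; rewrite eqxx.
      apply: (lm_char Hmo).
        rewrite mcoeff_msupp /h2 eqxx mcoeffD mcoeffZ mcoeffX eqxx mulr1.
        by move: hg; rewrite mcoeff_msupp negbK => /eqP ->; rewrite add0r.
      move=> b; rewrite /h2 eqxx => /msuppD_le; rewrite mem_cat msuppMCX // mem_seq1.
      case/orP => [/hlt /andP [] //|/eqP ->]; exact: (le_refl_ Hmo _).
    apply: (Q_of_bounds E).
    * move=> i; case: (eqVneq i j) => [->|nij].
        by rewrite hhj hFj /= ga; exact: (le_refl_ Hmo _).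
      rewrite /h2 (negPf nij) addr0; apply: olt_ole; exact: olt_of (hbh i) hf'.
    * apply: olt_ole; exact: olt_of hbr hf'.
    * by right; exists j; rewrite hhj hFj /= ga.
-
  set f' := f - c *: 'X_[a].
  have hf' : forall b, b \in msupp f' -> mlt le b a.
    move=> b hb; rewrite /mlt; apply/andP; split.
      move: (msuppB_le hb); rewrite mem_cat msuppMCX // mem_seq1 => /orP [/hfa//|/eqP ->].
      exact: (le_refl_ Hmo _).
    apply: contraTneq hb => ->.
    by rewrite mcoeff_msupp mcoeffB mcoeffZ mcoeffX eqxx mulr1 /c subrr eqxx.
  have [r [h [hr hdec hlm]]] := Qlow f' hf'.
  have [hbh hbr] := Q_bounds hlm.
  have hr' : forall b, b \in msupp r -> mlt le b a.
    move=> b hb; have := olt_of (ole_trans Hmo (lm_bound Hmo hb) hbr) hf'; done.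
  have ra : a \notin msupp r by apply/negP => /hr' /andP [_]; rewrite eqxx.
  exists (r + c *: 'X_[a]), h; split.
  + move=> b hb; have := hb; rewrite mcoeff_msupp mcoeffD mcoeffZ mcoeffX.
    case: (eqVneq a b) => [<-|nab].
      rewrite mulr1; move: ra; rewrite mcoeff_msupp negbK => /eqP -> _.
      rewrite add0r => -[j [beta [hFj hba] hu]].
      have [d hd] := key c0 hu.
      by apply: hn; exists j, beta, d; split.
    rewrite mulr0 addr0 => hb'; have := hr b; rewrite mcoeff_msupp => /(_ hb').
    by [].
  + by rewrite addrA -hdec /f' subrK.
  + have hlr : lm le (r + c *: 'X_[a]) = Some a.
      apply: (lm_char Hmo).
        by rewrite mcoeff_msupp mcoeffD mcoeffZ mcoeffX eqxx mulr1 (memN_msupp_eq0 ra) add0r.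
      move=> b /msuppD_le; rewrite mem_cat msuppMCX // mem_seq1.
      case/orP => [/hr' /andP [] //|/eqP ->]; exact: (le_refl_ Hmo _).
    apply: (Q_of_bounds E); last by left.
    * move=> i; apply: olt_ole; exact: olt_of (hbh i) hf'.
    * rewrite hlr; exact: (le_refl_ Hmo _).
Qed.
End Main.

Unset Implicit Arguments.

Theorem theorem5p3 (K : fieldType) (q : {poly K}) (m : nat)
  (le : rel 'X_{1..m}) (s : nat) (F : 'I_s -> {mpoly (Rq q)[m]}) :
  (1 < size q)%N ->
  monomial_order le ->
  (forall j : 'I_s, forall c : Rq q, F j != c%:MP) ->
  forall f : {mpoly (Rq q)[m]},
  exists (lambda : Rq q) (r : {mpoly (Rq q)[m]}) (h : 'I_s -> {mpoly (Rq q)[m]}),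
    [/\ lambda \is a GRing.unit,
        properly_reduced le F r,
        lambda *: f = \sum_(j < s) h j * F j + r
      & lm le f = omax le (foldr (omax le) None
                              [seq omul (lm le (h j)) (lm le (F j)) | j <- enum 'I_s])
                          (lm le r)].
Proof.
move=> _ Hmo _ f.
have [r [h [hr hdec hlm]]] := Q_all Hmo F f.
by exists 1, r, h; split; rewrite ?unitr1 ?scale1r.
Qed.
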